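(* Let $S$ be a closed connected oriented surface of genus $n\ge2$ and let $\chi\in H^1(S,\mathbb C)$ satisfy $\chi(H_1(S,\mathbb Z))=\mathbb Z+i\mathbb Z$ and $\omega(\chi)>0$. Then there is a symplectic basis $x_1,y_1,\dots,x_n,y_n$ of $H_1(S,\mathbb Z)$ such that $\mathrm{Im}(\overline{\chi(x_1)}\chi(y_1))>0$ and, for every $j=2,\dots,n$, $\chi(y_j)=0$ and $\chi(x_j)$ is a real number $\ge 0$.
   Context: A symplectic basis of $H_1(S,\mathbb Z)$ is a basis with intersection numbers $x_i\cdot y_j=\delta_{ij}$, $x_i\cdot x_j=y_i\cdot y_j=0$. $\omega(\chi):=\sum_{j=1}^n\mathrm{Im}(\overline{\chi(x_j)}\chi(y_j))$ for any symplectic basis (independent of the choice). *)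

(* Defs.v *)
From HB Require Import structures.
From mathcomp Require Import all_boot all_order all_algebra.
Set Implicit Arguments. Unset Strict Implicit. Unset Printing Implicit Defensive.
Import Order.TTheory GRing.Theory Num.Theory.
Local Open Scope ring_scope.

(* Model of H_1(S,Z) for a closed oriented surface of genus n:
   Z^n x Z^n, coordinates w.r.t. a fixed (reference) symplectic basis
   a_1..a_n, b_1..b_n with a_i . b_j = delta_ij. *)
Definition H1 (n : nat) := ('rV[int]_n * 'rV[int]_n)%type.

Definition inter (n : nat) (u v : H1 n) : int :=
  \sum_(i < n) (u.1 0 i * v.2 0 i - u.2 0 i * v.1 0 i).

Definition stdx (n : nat) (i : 'I_n) : H1 n := (delta_mx 0 i, 0).
Definition stdy (n : nat) (i : 'I_n) : H1 n := (0, delta_mx 0 i).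

Definition symplectic_basis (n : nat) (x y : 'I_n -> H1 n) : Prop :=
  [/\ (forall i j, inter (x i) (y j) = (i == j)%:R),
      (forall i j, inter (x i) (x j) = 0),
      (forall i j, inter (y i) (y j) = 0),
      (forall u : H1 n, exists a b : 'I_n -> int,
          u = \sum_(i < n) (x i *~ a i + y i *~ b i)) &
      (forall a b : 'I_n -> int,
          \sum_(i < n) (x i *~ a i + y i *~ b i) = 0 ->
          forall i, a i = 0 /\ b i = 0)].

(* a class chi in H^1(S,C) = Hom(H_1(S,Z), C) *)
Definition cohom_class (C : numClosedFieldType) (n : nat) (chi : H1 n -> C) : Prop :=
  forall u v, chi (u + v) = chi u + chi v.

(* omega(chi), computed in the reference symplectic basis
   (independent of the choice of symplectic basis) *)
Definition omega (C : numClosedFieldType) (n : nat) (chi : H1 n -> C) : C :=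
  \sum_(i < n) 'Im ((chi (stdx i))^* * chi (stdy i)).

(* Main.v *)
Require Import Defs.
From HB Require Import structures.
From mathcomp Require Import all_boot all_order all_algebra zify ring lra.
Import Order.TTheory GRing.Theory Num.Theory.
Set Implicit Arguments. Unset Strict Implicit. Unset Printing Implicit Defensive.
Local Open Scope ring_scope.

HB.instance Definition _ n := GRing.Zmodule.on (H1 n).

Definition addF (V W : zmodType) (g : V -> W) := forall u v, g (u + v) = g u + g v.



Lemma addF0 (V W : zmodType) (g : V -> W) : addF g -> g 0 = 0.
Proof. move=> h; have := h 0 0; rewrite addr0 => /eqP; rewrite -subr_eq0 opprD addrA subrr sub0r oppr_eq0 => /eqP ->. by []. Qed.

Lemma addFN (V W : zmodType) (g : V -> W) : addF g -> forall u, g (- u) = - g u.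
Proof. move=> h u; apply/eqP; rewrite -subr_eq0 opprK -h addNr (addF0 h) //. Qed.

Lemma addFn (V W : zmodType) (g : V -> W) : addF g -> forall u m, g (u *+ m) = g u *+ m.
Proof. move=> h u; elim=> [|m IH]; first by rewrite !mulr0n (addF0 h). by rewrite !mulrS h IH. Qed.

Lemma addFz (V W : zmodType) (g : V -> W) : addF g -> forall u z, g (u *~ z) = g u *~ z.
Proof. move=> h u [m|m]; first by rewrite -!pmulrn (addFn h).
by rewrite !NegzE !mulrNz (addFN h) -!pmulrn (addFn h). Qed.

Lemma addF_sum (V W : zmodType) (g : V -> W) n (F : 'I_n -> V) : addF g -> g (\sum_(i < n) F i) = \sum_(i < n) g (F i).
Proof. move=> h; exact: (big_morph g h (addF0 h)). Qed.

Lemma interDl n (u v w : H1 n) : inter (u + v) w = inter u w + inter v w.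
Proof. rewrite /inter -big_split /=; apply: eq_bigr => i _. rewrite !mxE. ring. Qed.

Lemma interC n (u v : H1 n) : inter u v = - inter v u.
Proof. rewrite /inter -sumrN; apply: eq_bigr => i _. ring. Qed.

Lemma interDr n (u v w : H1 n) : inter w (u + v) = inter w u + inter w v.
Proof. by rewrite interC interDl opprD -!interC. Qed.

Lemma addF_interl n (w : H1 n) : addF (fun u : H1 n => inter u w).
Proof. move=> u v; exact: interDl. Qed.
Lemma addF_interr n (w : H1 n) : addF (inter w).
Proof. move=> u v; exact: interDr. Qed.

Lemma interZl n (u w : H1 n) z : inter (u *~ z) w = inter u w * z.
Proof. by rewrite (addFz (addF_interl w)) mulrzz. Qed.
Lemma interZr n (u w : H1 n) z : inter w (u *~ z) = inter w u * z.
Proof. by rewrite (addFz (addF_interr w)) mulrzz. Qed.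
Lemma inter_self n (u : H1 n) : inter u u = 0.
Proof. have := interC u u => /eqP; rewrite -subr_eq0 opprK -mulr2n mulrn_eq0 /= => /eqP //. Qed.

Lemma SB_indep n (x y : 'I_n -> H1 n) :
  (forall i j, inter (x i) (y j) = (i == j)%:R) ->
  (forall i j, inter (x i) (x j) = 0) ->
  (forall i j, inter (y i) (y j) = 0) ->
  forall a b : 'I_n -> int,
    \sum_(i < n) (x i *~ a i + y i *~ b i) = 0 -> forall i, a i = 0 /\ b i = 0.
Proof.
move=> hxy hxx hyy a b hs j; split.
- have := congr1 (fun u => inter u (y j)) hs => /=.
  rewrite (addF_sum _ (addF_interl (y j))) (addF0 (addF_interl _)).
  rewrite (bigD1 j) //= big1 ?addr0.
  + by rewrite interDl !interZl hxy hyy eqxx /= mulr1n mul1r mul0r addr0.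
  + by move=> i /negbTE hij; rewrite interDl !interZl hxy hyy hij /= mulr0n !mul0r addr0.
- have := congr1 (fun u => inter (x j) u) hs => /=.
  rewrite (addF_sum _ (addF_interr (x j))) (addF0 (addF_interr _)).
  rewrite (bigD1 j) //= big1 ?addr0.
  + by rewrite interDr !interZr hxy hxx eqxx /= mulr1n mul1r mul0r add0r.
  + by move=> i /negbTE hij; rewrite interDr !interZr hxy hxx eq_sym hij /= mulr0n !mul0r addr0.
Qed.

Lemma SB_map n (phi : H1 n -> H1 n) (x y : 'I_n -> H1 n) :
  addF phi -> (forall u v, inter (phi u) (phi v) = inter u v) ->
  (forall w, exists u, phi u = w) ->
  symplectic_basis x y -> symplectic_basis (fun i => phi (x i)) (fun i => phi (y i)).
Proof.
move=> ha hi hs [hxy hxx hyy hsp _].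
have hxy' : forall i j, inter (phi (x i)) (phi (y j)) = (i == j)%:R by move=> i j; rewrite hi.
have hxx' : forall i j, inter (phi (x i)) (phi (x j)) = 0 by move=> i j; rewrite hi.
have hyy' : forall i j, inter (phi (y i)) (phi (y j)) = 0 by move=> i j; rewrite hi.
split; [exact: hxy'|exact: hxx'|exact: hyy'| |exact: SB_indep].
move=> w; have [u <-] := hs w; have [a [b ->]] := hsp u.
exists a, b; rewrite (addF_sum _ ha); apply: eq_bigr => i _.
by rewrite ha !(addFz ha).
Qed.

Definition tv n (v : H1 n) (k : int) (u : H1 n) := u + v *~ (k * inter u v).
Definition pm n (a b : H1 n) (k : int) (u : H1 n) :=
  u + a *~ (k * inter u b) + b *~ (k * inter u a).

Lemma tv_add n (v : H1 n) k : addF (tv v k).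
Proof. move=> u w; rewrite /tv interDl mulrDr mulrzDr; rewrite -!addrA; congr (_ + _).
by rewrite addrC -!addrA; congr (_ + _); rewrite addrC. Qed.

Lemma tv_inter n (v : H1 n) k u w : inter (tv v k u) (tv v k w) = inter u w.
Proof.
rewrite /tv !interDl !interDr !interZl !interZr [inter v v]inter_self [inter v w]interC.
ring.
Qed.

Lemma tv_surj n (v : H1 n) k w : exists u, tv v k u = w.
Proof.
exists (tv v (- k) w); rewrite /tv interDl interZl [inter v v]inter_self mul0r addr0.
by rewrite -addrA -mulrzDr mulNr addNr mulr0z addr0.
Qed.

Lemma pm_add n (a b : H1 n) k : addF (pm a b k).
Proof. move=> u w; rewrite /pm !interDl !mulrDr !mulrzDr.
by rewrite [RHS]addrACA [X in _ = X + _]addrACA.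
Qed.

Lemma interl_comb n (u v a b : H1 n) (al be : int) :
  inter (u + a *~ al + b *~ be) v = inter u v + al * inter a v + be * inter b v.
Proof. rewrite !interDl !interZl; ring. Qed.

Lemma interr_comb n (u v a b : H1 n) (al be : int) :
  inter v (u + a *~ al + b *~ be) = inter v u + al * inter v a + be * inter v b.
Proof. rewrite !interDr !interZr; ring. Qed.

Lemma inter_comb n (u w a b : H1 n) (al be ga de : int) :
  inter (u + a *~ al + b *~ be) (w + a *~ ga + b *~ de) =
  inter u w + ga * inter u a + de * inter u b + al * (inter a w + ga * inter a a + de * inter a b)
  + be * (inter b w + ga * inter b a + de * inter b b).
Proof. by rewrite interl_comb !interr_comb. Qed.

Lemma pm_inter n (a b : H1 n) k u w : inter a b = 0 ->
  inter (pm a b k u) (pm a b k w) = inter u w.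
Proof.
move=> hab; rewrite /pm inter_comb [inter a a]inter_self [inter b b]inter_self hab.
rewrite [inter b a]interC hab [inter a w]interC [inter b w]interC.
ring.
Qed.

Lemma pm_surj n (a b : H1 n) k w : inter a b = 0 -> exists u, pm a b k u = w.
Proof.
move=> hab; exists (pm a b (- k) w); rewrite /pm !interl_comb [inter a a]inter_self [inter b b]inter_self hab.
rewrite [inter b a]interC hab oppr0 !mulr0 !addr0 !mulNr !mulrNz.
by rewrite addrAC subrK subrK.
Qed.

Lemma g_tv n (g : H1 n -> int) v k u : addF g -> g (tv v k u) = g u + g v * (k * inter u v).
Proof. by move=> h; rewrite /tv h (addFz h) mulrzz. Qed.

Lemma g_pm n (g : H1 n -> int) a b k u : addF g ->
  g (pm a b k u) = g u + g a * (k * inter u b) + g b * (k * inter u a).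
Proof. by move=> h; rewrite /pm !h !(addFz h) !mulrzz. Qed.

Definition tsum n (p q : H1 n -> int) (x y : 'I_n -> H1 n) :=
  \sum_(t < n) (p (x t) * q (y t) - q (x t) * p (y t)).

Definition Good n (S : pred 'I_n) (x y x' y' : 'I_n -> H1 n) : Prop :=
 [/\ symplectic_basis x' y',
     forall t, ~~ S t -> x' t = x t /\ y' t = y t,
     forall g : H1 n -> int, addF g -> (forall s, S s -> g (x s) = 0 /\ g (y s) = 0) ->
        forall s, S s -> g (x' s) = 0 /\ g (y' s) = 0 &
     forall p q : H1 n -> int, addF p -> addF q -> tsum p q x' y' = tsum p q x y].

Lemma Good_refl n S (x y : 'I_n -> H1 n) : symplectic_basis x y -> Good S x y x y.
Proof. by move=> h; split. Qed.

Lemma Good_trans n S (x y x1 y1 x2 y2 : 'I_n -> H1 n) :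
  Good S x y x1 y1 -> Good S x1 y1 x2 y2 -> Good S x y x2 y2.
Proof.
move=> [_ o1 g1 t1] [s2 o2 g2 t2]; split => //.
- move=> t ht; have [<- <-] := o1 t ht; exact: o2.
- move=> g hg h0; apply: g2 => //; exact: g1.
- move=> p q hp hq; rewrite t2 // t1 //.
Qed.

Lemma Good_mono n (S1 S2 : pred 'I_n) (x y x' y' : 'I_n -> H1 n) :
  (forall t, S1 t -> S2 t) -> Good S1 x y x' y' -> Good S2 x y x' y'.
Proof.
move=> sub [s o g t]; split => //.
- move=> u hu; apply: o; apply/negP => /sub; exact/negP.
- move=> h hh h0 s' hs'; case hs1: (S1 s').
  + apply: g => // s'' /sub; exact: h0.
  + have [-> ->] := o s' (negbT hs1); exact: h0.
Qed.

Lemma tv_fix n (v u : H1 n) k : inter u v = 0 -> tv v k u = u.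
Proof. by move=> h; rewrite /tv h mulr0 mulr0z addr0. Qed.

Lemma pm_fix n (a b u : H1 n) k : inter u a = 0 -> inter u b = 0 -> pm a b k u = u.
Proof. by move=> h1 h2; rewrite /pm h1 h2 mulr0 !mulr0z !addr0. Qed.

Lemma delta_sum n (F : 'I_n -> int) i : \sum_(t < n) (if t == i then F t else 0) = F i.
Proof. rewrite (bigD1 i) //= eqxx big1 ?addr0 // => t /negbTE ->; by []. Qed.

Lemma SB_xy n (x y : 'I_n -> H1 n) : symplectic_basis x y -> forall i j, inter (x i) (y j) = (i == j)%:R.
Proof. by case. Qed.
Lemma SB_xx n (x y : 'I_n -> H1 n) : symplectic_basis x y -> forall i j, inter (x i) (x j) = 0.
Proof. by case. Qed.
Lemma SB_yy n (x y : 'I_n -> H1 n) : symplectic_basis x y -> forall i j, inter (y i) (y j) = 0.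
Proof. by case. Qed.

Lemma natr_if (b : bool) (c : int) : c * (b%:R : int) = if b then c else 0.
Proof. by case: b; rewrite /= ?mulr1n ?mulr0n ?mulr1 ?mulr0. Qed.

Lemma delta_sumC n (c : int) (i : 'I_n) : \sum_(t < n) (if t == i then c else 0) = c.
Proof. exact: (delta_sum (fun _ => c)). Qed.

Lemma ds n (A : 'I_n -> int) K i j : \sum_(t < n) (A t + ((if t == i then K else 0) - (if t == j then K else 0))) = \sum_(t < n) A t.
Proof. by rewrite big_split /= sumrB !delta_sumC subrr addr0. Qed.

Lemma mv_tvy n (S : pred 'I_n) (x y : 'I_n -> H1 n) i k : symplectic_basis x y -> S i ->
  Good S x y (fun t => tv (y i) k (x t)) (fun t => tv (y i) k (y t)) /\
  (forall g, addF g -> forall t, g (tv (y i) k (x t)) = g (x t) + (if t == i then g (y i) * k else 0)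
                            /\ g (tv (y i) k (y t)) = g (y t)).
Proof.
move=> sb Si.
have eff : forall g, addF g -> forall t, g (tv (y i) k (x t)) = g (x t) + (if t == i then g (y i) * k else 0)
                            /\ g (tv (y i) k (y t)) = g (y t).
  move=> g hg t; rewrite !g_tv // (SB_xy sb) (SB_yy sb) mulr0 mulr0 addr0 mulrA natr_if; split => //; by case: (t == i).
split; last exact: eff. split.
- apply: SB_map => //; [exact: tv_add | exact: tv_inter | exact: tv_surj].
- move=> t nSt; have ti : (t == i) = false by apply/eqP => eti; move: nSt; rewrite eti Si.
  by rewrite !tv_fix // ?(SB_xy sb) ?(SB_yy sb) ?ti.
- move=> g hg h0 s Ss; have [e1 e2] := eff g hg s; rewrite e1 e2.
  have [h1 h2] := h0 s Ss; have [_ h3] := h0 i Si; rewrite h1 h2 h3 mul0r; by case: (s == i); rewrite addr0.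
- move=> p q hp hq; rewrite /tsum; apply: eq_bigr => t _.
  have [e1 e2] := eff p hp t; have [e3 e4] := eff q hq t; rewrite e1 e2 e3 e4.
  case: eqP => [->|_]; last by rewrite !addr0.
  ring.
Qed.

Lemma mv_tvx n (S : pred 'I_n) (x y : 'I_n -> H1 n) i k : symplectic_basis x y -> S i ->
  Good S x y (fun t => tv (x i) k (x t)) (fun t => tv (x i) k (y t)) /\
  (forall g, addF g -> forall t, g (tv (x i) k (x t)) = g (x t)
                            /\ g (tv (x i) k (y t)) = g (y t) - (if t == i then g (x i) * k else 0)).
Proof.
move=> sb Si.
have eff : forall g, addF g -> forall t, g (tv (x i) k (x t)) = g (x t)
                            /\ g (tv (x i) k (y t)) = g (y t) - (if t == i then g (x i) * k else 0).
  move=> g hg t; rewrite !g_tv // (SB_xx sb) interC (SB_xy sb) mulr0 mulr0 addr0 !mulrN mulrA natr_if; split => //;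
  rewrite eq_sym; case: (t == i) => //; by rewrite oppr0.
split; last exact: eff. split.
- apply: SB_map => //; [exact: tv_add | exact: tv_inter | exact: tv_surj].
- move=> t nSt; have ti : (i == t) = false by apply/eqP => eti; move: nSt; rewrite -eti Si.
  by rewrite !tv_fix // ?(SB_xx sb) // interC (SB_xy sb) ti oppr0.
- move=> g hg h0 s Ss; have [e1 e2] := eff g hg s; rewrite e1 e2.
  have [h1 h2] := h0 s Ss; have [h3 _] := h0 i Si; rewrite h1 h2 h3 mul0r; by case: (s == i); rewrite subr0.
- move=> p q hp hq; rewrite /tsum; apply: eq_bigr => t _.
  have [e1 e2] := eff p hp t; have [e3 e4] := eff q hq t; rewrite e1 e2 e3 e4.
  case: eqP => [->|_]; last by rewrite !subr0.
  ring.
Qed.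

Lemma mv_pm n (S : pred 'I_n) (x y : 'I_n -> H1 n) i j k : symplectic_basis x y -> S i -> S j -> i != j ->
  Good S x y (fun t => pm (x j) (y i) k (x t)) (fun t => pm (x j) (y i) k (y t)) /\
  (forall g, addF g -> forall t, g (pm (x j) (y i) k (x t)) = g (x t) + (if t == i then g (x j) * k else 0)
                            /\ g (pm (x j) (y i) k (y t)) = g (y t) - (if t == j then g (y i) * k else 0)).
Proof.
move=> sb Si Sj nij.
have hab : inter (x j) (y i) = 0 by rewrite (SB_xy sb) eq_sym (negbTE nij).
have eff : forall g, addF g -> forall t, g (pm (x j) (y i) k (x t)) = g (x t) + (if t == i then g (x j) * k else 0)
                            /\ g (pm (x j) (y i) k (y t)) = g (y t) - (if t == j then g (y i) * k else 0).
  move=> g hg t; rewrite !g_pm // (SB_xx sb) (SB_yy sb) [inter (y t) (x j)]interC !(SB_xy sb).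
  rewrite !mulr0 !addr0 !mulrN !mulrA !natr_if [j == t]eq_sym; split => //;
  by case: (t == j) => //; rewrite oppr0.
split; last exact: eff. split.
- apply: SB_map => //; [exact: pm_add | move=> u v; exact: pm_inter | move=> w; exact: pm_surj].
- move=> t nSt; have ti : (t == i) = false by apply/eqP => eti; move: nSt; rewrite eti Si.
  have tj : (j == t) = false by apply/eqP => eti; move: nSt; rewrite -eti Sj.
  by rewrite !pm_fix // ?(SB_xx sb) ?(SB_yy sb) ?(SB_xy sb) ?ti // interC (SB_xy sb) tj oppr0.
- move=> g hg h0 s Ss; have [e1 e2] := eff g hg s; rewrite e1 e2.
  have [h1 h2] := h0 s Ss; have [h3 _] := h0 j Sj; have [_ h4] := h0 i Si.
  rewrite h1 h2 h3 h4 !mul0r; by case: (s == i); case: (s == j); rewrite ?addr0 ?subr0.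
- move=> p q hp hq; rewrite /tsum.
  pose K := k * (p (x j) * q (y i) - q (x j) * p (y i)).
  have pt : forall t, p (pm (x j) (y i) k (x t)) * q (pm (x j) (y i) k (y t)) -
                      q (pm (x j) (y i) k (x t)) * p (pm (x j) (y i) k (y t)) =
            (p (x t) * q (y t) - q (x t) * p (y t)) + ((if t == i then K else 0) - (if t == j then K else 0)).
    move=> t; have [e1 e2] := eff p hp t; have [e3 e4] := eff q hq t; rewrite e1 e2 e3 e4.
    case: (eqVneq t i) => [eti|nti].
    + have tj : (t == j) = false by rewrite eti (negbTE nij).
      rewrite tj eti /K; ring.
    + case: (eqVneq t j) => [etj|ntj]; last by ring.
      rewrite etj ?eqxx ?(negbTE (nti : t != i)) /K; rewrite -?etj; ring.
  rewrite (eq_bigr _ (fun t _ => pt t)); exact: ds.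
Qed.

Lemma euclid_fin (St : Type) (Q : St -> Prop) (R : St -> St -> Prop) (v : St -> int * int)
  (Rrefl : forall s, Q s -> R s s)
  (Rtrans : forall s1 s2 s3, R s1 s2 -> R s2 s3 -> R s1 s3)
  (mA : forall s k, Q s -> exists2 s', Q s' /\ R s s' & v s' = ((v s).1 + k * (v s).2, (v s).2))
  (mB : forall s k, Q s -> exists2 s', Q s' /\ R s s' & v s' = ((v s).1, (v s).2 + k * (v s).1)) :
  forall s, Q s -> (v s).2 = 0 -> exists s', [/\ Q s', R s s', (v s').2 = 0 & 0 <= (v s').1].
Proof.
move=> s Qs hb; case: (lerP 0 (v s).1) => ha; first by exists s; split => //; exact: Rrefl.
have [s1 [Q1 R1] e1] := mB s 1 Qs.
have [s2 [Q2 R2] e2] := mA s1 (-2) Q1.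
have [s3 [Q3 R3] e3] := mB s2 1 Q2.
exists s3; split => //.
- exact: (Rtrans _ _ _ R1 (Rtrans _ _ _ R2 R3)).
- rewrite e3 e2 e1 /= hb; ring.
- rewrite e3 e2 e1 /= hb; lia.
Qed.

Lemma euclid (St : Type) (Q : St -> Prop) (R : St -> St -> Prop) (v : St -> int * int)
  (Rrefl : forall s, Q s -> R s s)
  (Rtrans : forall s1 s2 s3, R s1 s2 -> R s2 s3 -> R s1 s3)
  (mA : forall s k, Q s -> exists2 s', Q s' /\ R s s' & v s' = ((v s).1 + k * (v s).2, (v s).2))
  (mB : forall s k, Q s -> exists2 s', Q s' /\ R s s' & v s' = ((v s).1, (v s).2 + k * (v s).1)) :
  forall s, Q s -> exists s', [/\ Q s', R s s', (v s').2 = 0 & 0 <= (v s').1].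
Proof.
have fin := euclid_fin Rrefl Rtrans mA mB.
suff H : forall N s, Q s -> `|(v s).1| + `|(v s).2| <= N%:Z -> exists s', [/\ Q s', R s s', (v s').2 = 0 & 0 <= (v s').1].
  move=> s Qs; apply: (H (absz (v s).1 + absz (v s).2)%N) => //; lia.
elim=> [|N IH] s Qs hN.
  by apply: fin => //; lia.
case: (eqVneq (v s).2 0) => [hb|hb]; first exact: fin.
case: (eqVneq (v s).1 0) => [ha|ha].
  have [s1 [Q1 R1] e1] := mA s 1 Qs.
  have [s2 [Q2 R2] e2] := mB s1 (-1) Q1.
  have e3 : (v s2).2 = 0 by rewrite e2 e1 /= ha; ring.
  have [s3 [Q3 R3 h3 h3']] := fin s2 Q2 e3.
  exists s3; split => //; exact: (Rtrans _ _ _ R1 (Rtrans _ _ _ R2 R3)).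
case: (lerP `|(v s).2| `|(v s).1|) => hab.
  have [s1 [Q1 R1] e1] := mA s (- ((v s).1 %/ (v s).2)%Z) Qs.
  have em : (v s).1 + - ((v s).1 %/ (v s).2)%Z * (v s).2 = ((v s).1 %% (v s).2)%Z.
    by rewrite {1}(divz_eq (v s).1 (v s).2); ring.
  have l1 := ltz_mod (v s).1 hb; have l2 := modz_ge0 (v s).1 hb.
  have m1 : `|(v s1).1| + `|(v s1).2| <= N%:Z by rewrite e1 /= em; lia.
  have [s3 [Q3 R3 h3 h3']] := IH s1 Q1 m1.
  exists s3; split => //; exact: (Rtrans _ _ _ R1 R3).
have [s1 [Q1 R1] e1] := mB s (- ((v s).2 %/ (v s).1)%Z) Qs.
have em : (v s).2 + - ((v s).2 %/ (v s).1)%Z * (v s).1 = ((v s).2 %% (v s).1)%Z.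
  by rewrite {1}(divz_eq (v s).2 (v s).1); ring.
have l1 := ltz_mod (v s).2 ha; have l2 := modz_ge0 (v s).2 ha.
have m1 : `|(v s1).1| + `|(v s1).2| <= N%:Z by rewrite e1 /= em; lia.
  have [s3 [Q3 R3 h3 h3']] := IH s1 Q1 m1.
exists s3; split => //; exact: (Rtrans _ _ _ R1 R3).
Qed.

Lemma pair_norm n (x y : 'I_n -> H1 n) t (f : H1 n -> int) : addF f -> symplectic_basis x y ->
  exists x' y', [/\ Good (pred1 t) x y x' y', f (y' t) = 0 & 0 <= f (x' t)].
Proof.
move=> hf sb.
pose St := (('I_n -> H1 n) * ('I_n -> H1 n))%type.
pose Q := fun s : St => symplectic_basis s.1 s.2.
pose R := fun s s' : St => Good (pred1 t) s.1 s.2 s'.1 s'.2.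
pose v := fun s : St => (f (s.1 t), f (s.2 t)).
have St1 : (pred1 t) t by rewrite /= eqxx.
have [s' [Q' R' h1 h2]] : exists s', [/\ Q s', R (x, y) s', (v s').2 = 0 & 0 <= (v s').1].
  apply: (euclid (Q := Q) (R := R)).
  - move=> s Qs; exact: (@Good_refl n (pred1 t) s.1 s.2 Qs).
  - move=> s1 s2 s3; exact: Good_trans.
  - move=> [x1 y1] k /= Qs.
    have [G eff] := mv_tvy (S := pred1 t) (i := t) k Qs St1.
    exists ((fun u => tv (y1 t) k (x1 u)), (fun u => tv (y1 t) k (y1 u))); first by split; [case: G | exact: G].
    have [e1 _] := eff f hf t; have [_ e2] := eff f hf t.
    by rewrite /v /= e1 e2 eqxx mulrC.
  - move=> [x1 y1] k /= Qs.
    have [G eff] := mv_tvx (S := pred1 t) (i := t) (- k) Qs St1.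
    exists ((fun u => tv (x1 t) (- k) (x1 u)), (fun u => tv (x1 t) (- k) (y1 u))); first by split; [case: G | exact: G].
    have [e1 _] := eff f hf t; have [_ e2] := eff f hf t.
    by rewrite /v /= e1 e2 eqxx mulrN opprK mulrC.
  - exact: sb.
by exists s'.1, s'.2; split.
Qed.

Lemma norm_all n (S : pred 'I_n) (x y : 'I_n -> H1 n) (f : H1 n -> int) : addF f -> symplectic_basis x y ->
  forall m, exists x' y', Good S x y x' y' /\
    (forall t, S t -> (t < m)%N -> f (y' t) = 0 /\ 0 <= f (x' t)).
Proof.
move=> hf sb; elim=> [|m [x1 [y1 [G1 H1]]]].
  by exists x, y; split => //; exact: Good_refl.
have sb1 : symplectic_basis x1 y1 by case: G1.
case: (ltnP m n) => hm; last first.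
  exists x1, y1; split => // t St ht; apply: H1 => //.
  by move: (ltn_ord t) => ?; lia.
pose t0 := Ordinal hm.
case St0 : (S t0); last first.
  exists x1, y1; split => // t St ht; apply: H1 => //.
  rewrite ltnS leq_eqVlt in ht; case/orP: ht => // /eqP ht.
  have : t = t0 by apply: val_inj.
  by move=> e; rewrite e St0 in St.
have [x2 [y2 [G2 e1 e2]]] := pair_norm t0 hf sb1.
exists x2, y2; split.
  apply: Good_trans G1 _; apply: Good_mono G2 => u /eqP ->; exact: St0.
move=> t St ht; case: (eqVneq t t0) => [->|ne]; first by split.
have [_ o _ _] := G2.
have nt : ~~ (pred1 t0) t by rewrite /= ne.
have [-> ->] := o t nt.
apply: H1 => //.
rewrite ltnS leq_eqVlt in ht; case/orP: ht => // /eqP ht.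
by case/eqP: ne; apply: val_inj.
Qed.

Lemma cross n (S : pred 'I_n) (x y : 'I_n -> H1 n) i0 t (f : H1 n -> int) : addF f -> symplectic_basis x y ->
  S i0 -> S t -> t != i0 -> (forall u, S u -> f (y u) = 0) ->
  exists x' y', [/\ Good (fun u => (u == t) || (u == i0)) x y x' y', (forall u, S u -> f (y' u) = 0),
     f (x' t) = 0 & 0 <= f (x' i0)].
Proof.
move=> hf sb Si0 St nt hy.
pose P := fun u => (u == t) || (u == i0).
pose St' := (('I_n -> H1 n) * ('I_n -> H1 n))%type.
pose Q := fun s : St' => symplectic_basis s.1 s.2 /\ forall u, S u -> f (s.2 u) = 0.
pose R := fun s s' : St' => Good P s.1 s.2 s'.1 s'.2.
pose v := fun s : St' => (f (s.1 i0), f (s.1 t)).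
have Pt : P t by rewrite /P eqxx.
have Pi0 : P i0 by rewrite /P eqxx orbT.
have nt' : i0 != t by rewrite eq_sym.
have [s' [[Q1' Q2'] R' h1 h2]] : exists s', [/\ Q s', R (x, y) s', (v s').2 = 0 & 0 <= (v s').1].
  apply: (euclid (Q := Q) (R := R)).
  - move=> s [Qs _]; exact: (@Good_refl n P s.1 s.2 Qs).
  - move=> s1 s2 s3; exact: Good_trans.
  - move=> [x1 y1] k /= [sb1 hy1].
    have [G eff] := mv_pm (S := P) (i := i0) (j := t) k sb1 Pi0 Pt nt'.
    exists ((fun u => pm (x1 t) (y1 i0) k (x1 u)), (fun u => pm (x1 t) (y1 i0) k (y1 u))).
      split; last exact: G.
      split; first by case: G.
      move=> u Su /=; have [_ e] := eff f hf u; rewrite e hy1 // (hy1 i0 Si0) mul0r.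
      by case: (u == t); rewrite subr0.
    have [e1 _] := eff f hf i0; have [e2 _] := eff f hf t.
    by rewrite /v /= e1 e2 eqxx (negbTE nt) addr0 mulrC.
  - move=> [x1 y1] k /= [sb1 hy1].
    have [G eff] := mv_pm (S := P) (i := t) (j := i0) k sb1 Pt Pi0 nt.
    exists ((fun u => pm (x1 i0) (y1 t) k (x1 u)), (fun u => pm (x1 i0) (y1 t) k (y1 u))).
      split; last exact: G.
      split; first by case: G.
      move=> u Su /=; have [_ e] := eff f hf u; rewrite e hy1 // (hy1 t St) mul0r.
      by case: (u == i0); rewrite subr0.
    have [e1 _] := eff f hf i0; have [e2 _] := eff f hf t.
    by rewrite /v /= e1 e2 eqxx (negbTE nt') addr0 mulrC.
  - by split.
by exists s'.1, s'.2; split.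
Qed.

Lemma cross_all n (S : pred 'I_n) (x y : 'I_n -> H1 n) i0 (f : H1 n -> int) : addF f -> symplectic_basis x y ->
  S i0 -> (forall u, S u -> f (y u) = 0) -> 0 <= f (x i0) ->
  forall m, exists x' y', [/\ Good S x y x' y', (forall u, S u -> f (y' u) = 0), 0 <= f (x' i0) &
     forall u, S u -> u != i0 -> (u < m)%N -> f (x' u) = 0].
Proof.
move=> hf sb Si0 hy hx; elim=> [|m [x1 [y1 [G1 hy1 hx1 H1]]]].
  exists x, y; split; [exact: Good_refl | exact: hy | exact: hx | by []].
have sb1 : symplectic_basis x1 y1 by case: G1.
case: (ltnP m n) => hm; last first.
  exists x1, y1; split; [exact: G1 | exact: hy1 | exact: hx1 | ].
  move=> t St ht hlt; apply: H1 => //.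
  by move: (ltn_ord t) => ?; lia.
pose t0 := Ordinal hm.
case St0 : (S t0 && (t0 != i0)); last first.
  exists x1, y1; split; [exact: G1 | exact: hy1 | exact: hx1 | ].
  move=> t St ht hlt; apply: H1 => //.
  rewrite ltnS leq_eqVlt in hlt; case/orP: hlt => // /eqP hlt.
  have e : t = t0 by apply: val_inj.
  by move: St0; rewrite -e St ht.
case/andP: St0 => St0 nt0.
have [x2 [y2 [G2 hy2 e1 e2]]] := cross hf sb1 Si0 St0 nt0 hy1.
exists x2, y2; split; [ | exact: hy2 | exact: e2 | ].
  apply: Good_trans G1 _; apply: Good_mono G2 => u /orP [] /eqP -> //.
move=> t St ht hlt; case: (eqVneq t t0) => [-> //|ne].
have [_ o _ _] := G2.
have nt : ~~ ((t == t0) || (t == i0)) by rewrite negb_or ne ht.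
have [-> _] := o t nt.
apply: H1 => //.
rewrite ltnS leq_eqVlt in hlt; case/orP: hlt => // /eqP hlt.
by case/eqP: ne; apply: val_inj.
Qed.

Lemma reduce n (S : pred 'I_n) (x y : 'I_n -> H1 n) i0 (f : H1 n -> int) : addF f -> symplectic_basis x y ->
  S i0 -> exists x' y', [/\ Good S x y x' y', f (y' i0) = 0, 0 <= f (x' i0) &
     forall u, S u -> u != i0 -> f (x' u) = 0 /\ f (y' u) = 0].
Proof.
move=> hf sb Si0.
have [x1 [y1 [G1 H1]]] := norm_all S hf sb n.
have sb1 : symplectic_basis x1 y1 by case: G1.
have hy1 : forall u, S u -> f (y1 u) = 0 by move=> u Su; have [] := H1 u Su (ltn_ord u).
have hx1 : 0 <= f (x1 i0) by have [] := H1 i0 Si0 (ltn_ord i0).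
have [x2 [y2 [G2 hy2 hx2 H2]]] := cross_all hf sb1 Si0 hy1 hx1 n.
exists x2, y2; split.
- exact: Good_trans G1 G2.
- exact: hy2.
- exact: hx2.
- move=> u Su nu; split; [exact: H2 Su nu (ltn_ord u) | exact: hy2].
Qed.

Lemma cplx_inj (C : numClosedFieldType) (a b c d : int) :
  (a%:~R + 'i * b%:~R : C) = c%:~R + 'i * d%:~R -> a = c /\ b = d.
Proof.
move=> e.
have e1 := congr1 (fun z => 'Re z) e; have e2 := congr1 (fun z => 'Im z) e.
rewrite /= !Re_rect ?realz // in e1; rewrite /= !Im_rect ?realz // in e2.
by split; apply: (@intr_inj C).
Qed.

Lemma Im_form (C : numClosedFieldType) (a b c d : int) :
  'Im ((a%:~R + 'i * b%:~R : C)^* * (c%:~R + 'i * d%:~R)) = (a * d - b * c)%:~R.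
Proof.
have cc : (a%:~R + 'i * b%:~R : C)^* = a%:~R + - 'i * b%:~R.
  rewrite rmorphD rmorphM !rmorph_int; congr (_ + _); congr (_ * _); exact: conjCi.
rewrite cc.
have -> : (a%:~R + - 'i * b%:~R) * (c%:~R + 'i * d%:~R) =
   ((a * c + b * d)%:~R + 'i * (a * d - b * c)%:~R : C).
  apply/eqP; rewrite -subr_eq0.
  have -> : (a%:~R + - 'i * b%:~R) * (c%:~R + 'i * d%:~R) -
     ((a * c + b * d)%:~R + 'i * (a * d - b * c)%:~R : C) = - (b * d)%:~R * ('i * 'i + 1).
    rewrite ?intrD ?intrB ?intrM ?mulrNz ?intrM; ring.
  by rewrite mulCii addNr mulr0.
by rewrite Im_rect ?realz.
Qed.

Lemma fst_add n : addF (fun u : H1 n => u.1).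
Proof. by []. Qed.
Lemma snd_add n : addF (fun u : H1 n => u.2).
Proof. by []. Qed.
Lemma entry_add n (j : 'I_n) : addF (fun B : 'rV[int]_n => B 0 j).
Proof. by move=> B C; rewrite mxE. Qed.

Lemma entry_z n (A : 'rV[int]_n) j z : (A *~ z) 0 j = A 0 j * z.
Proof. by rewrite (addFz (entry_add j)) mulrzz. Qed.
Lemma fst_z n (u : H1 n) z : (u *~ z).1 = u.1 *~ z.
Proof. exact: (addFz (@fst_add n)). Qed.
Lemma snd_z n (u : H1 n) z : (u *~ z).2 = u.2 *~ z.
Proof. exact: (addFz (@snd_add n)). Qed.
Lemma sum_entry n (F : 'I_n -> 'rV[int]_n) j : (\sum_(i < n) F i) 0 j = \sum_(i < n) F i 0 j.
Proof. exact: (addF_sum _ (entry_add j)). Qed.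

Lemma inter_stdy n (u : H1 n) j : inter u (stdy j) = u.1 0 j.
Proof.
rewrite /inter (bigD1 j) //= big1 => [|t ntj]; rewrite !mxE /= ?eqxx.
- by rewrite mulr1n mulr1 mulr0 subr0 addr0.
- by rewrite (negbTE ntj) mulr0n mulr0 mulr0 subr0.
Qed.

Lemma inter_stdx n (u : H1 n) j : inter u (stdx j) = - u.2 0 j.
Proof.
rewrite /inter (bigD1 j) //= big1 => [|t ntj]; rewrite !mxE /= ?eqxx.
- by rewrite mulr1n mulr1 mulr0 sub0r addr0.
- by rewrite (negbTE ntj) mulr0n mulr0 mulr0 subr0.
Qed.

Lemma std_SB n : symplectic_basis (@stdx n) (@stdy n).
Proof.
have hxy : forall i j, inter (@stdx n i) (stdy j) = (i == j)%:R.
  by move=> i j; rewrite inter_stdy /= mxE (eq_sym j i).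
have hxx : forall i j, inter (@stdx n i) (stdx j) = 0.
  by move=> i j; rewrite inter_stdx /= mxE oppr0.
have hyy : forall i j, inter (@stdy n i) (stdy j) = 0.
  by move=> i j; rewrite inter_stdy /= mxE.
split; [exact: hxy | exact: hxx | exact: hyy | | exact: SB_indep].
move=> [u1 u2]; exists (fun i => u1 0 i), (fun i => u2 0 i).
rewrite [RHS]surjective_pairing; congr (_, _).
- rewrite (addF_sum _ (@fst_add n)); apply/rowP => j.
  rewrite sum_entry (bigD1 j) //= big1 => [|t ntj].
  + rewrite !fst_z /= !mxE !entry_z !mxE /= eqxx /= mulr1n.
    by rewrite mul1r mul0r !addr0.
  + rewrite !fst_z /= !mxE !entry_z !mxE /= eq_sym (negbTE ntj) /=.
    by rewrite mulr0n !mul0r addr0.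
- rewrite (addF_sum _ (@snd_add n)); apply/rowP => j.
  rewrite sum_entry (bigD1 j) //= big1 => [|t ntj].
  + rewrite !snd_z /= !mxE !entry_z !mxE /= eqxx /= mulr1n.
    by rewrite mul1r mul0r !addr0 add0r.
  + rewrite !snd_z /= !mxE !entry_z !mxE /= eq_sym (negbTE ntj) /=.
    by rewrite mulr0n !mul0r addr0.
Qed.

Unset Implicit Arguments.

Theorem mainTheorem13 (C : numClosedFieldType) (n : nat) (hn : (2 <= n)%N)
  (chi : H1 n -> C) (hchi : cohom_class chi)
  (himg : forall z : C,
      (exists u : H1 n, chi u = z) <->
      (exists a b : int, z = a%:~R + 'i * b%:~R))
  (hom : 0 < omega chi) :
  exists x y : 'I_n -> H1 n,
    [/\ symplectic_basis x y,
        (forall i : 'I_n, nat_of_ord i = 0%N ->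
           0 < 'Im ((chi (x i))^* * chi (y i))) &
        (forall j : 'I_n, (0 < nat_of_ord j)%N ->
           [/\ chi (y j) = 0, chi (x j) \is Num.real & 0 <= chi (x j)])].
Proof.
have ex : forall u, exists ab : int * int, chi u == ab.1%:~R + 'i * ab.2%:~R.
  move=> u; have [a [b e]] := (himg (chi u)).1 (ex_intro _ u erefl).
  by exists (a, b); rewrite /= e.
pose p u := (xchoose (ex u)).1.
pose q u := (xchoose (ex u)).2.
have hpq : forall u, chi u = (p u)%:~R + 'i * (q u)%:~R.
  move=> u; exact/eqP/(xchooseP (ex u)).
have addpq : forall u v, p (u + v) = p u + p v /\ q (u + v) = q u + q v.
  move=> u v; apply: (@cplx_inj C); rewrite -hpq hchi !hpq !intrD; ring.
have hp : addF p by move=> u v; case: (addpq u v).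
have hq : addF q by move=> u v; case: (addpq u v).
have n0 : (0 < n)%N by lia.
have n1 : (1 < n)%N by lia.
pose i0 := Ordinal n0.
pose i1 := Ordinal n1.
have [x1 [y1 [G1 _ _ H1]]] := reduce (S := predT) (i0 := i0) hq (std_SB n) isT.
pose S2 := fun u : 'I_n => u != i0.
have S2i1 : S2 i1 by [].
have sb1 : symplectic_basis x1 y1 by case: G1.
have [x2 [y2 [G2 hy2 hx2 H2]]] := reduce (S := S2) (i0 := i1) hp sb1 S2i1.
have [sb2 o2 g2 t2] := G2.
have [_ _ _ t1] := G1.
have qz : forall s, S2 s -> q (x2 s) = 0 /\ q (y2 s) = 0.
  apply: g2 => // s hs; exact: H1 s isT hs.
exists x2, y2; split.
- exact: sb2.
- move=> i hi; have ei : i = i0 by apply: val_inj.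
  rewrite ei !hpq Im_form ltr0z.
  have e1 : tsum p q x2 y2 = p (x2 i0) * q (y2 i0) - q (x2 i0) * p (y2 i0).
    rewrite /tsum (bigD1 i0) //= big1 ?addr0 // => t nt.
    have [qx qy] := qz t nt; by rewrite qx qy mulr0 mul0r subr0.
  have e2 : omega chi = (tsum p q (@stdx n) (@stdy n))%:~R.
    rewrite /omega /tsum rmorph_sum; apply: eq_bigr => t _.
    by rewrite !hpq Im_form.
  rewrite -e1 t2 // t1 // -(ltr0z C) -e2; exact: hom.
- move=> j hj.
  have S2j : S2 j by rewrite /S2 -(inj_eq val_inj) /=; rewrite eq_sym neq_ltn hj.
  have [qx qy] := qz j S2j.
  have [px py] : 0 <= p (x2 j) /\ p (y2 j) = 0.
    case: (eqVneq j i1) => [->|nj]; first by split.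
    have [e1 e2] := H2 j S2j nj; by rewrite e1 e2.
  rewrite !hpq qx qy py !mulr0z mulr0 addr0; split.
  + by [].
  + by rewrite addr0 realz.
  + by rewrite addr0 ler0z.
Qed.
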